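(* Let $G=(V,E)$ be a graph and $v\in V$. Then $v\in\mathrm{corona}(G)\setminus\mathrm{core}(G)$ if and only if either (1) $v\in V^-$ and $v$ is not isolated, or (2) $v\in V^0$, there exists a set $S\subseteq V\setminus\{v\}$ with $|S|=\gamma(G)$ that dominates $G-v$ and satisfies $S\cap N[v]\neq\emptyset$, and $\gamma(G_v+u)=\gamma(G)$.
   Context: All graphs are finite, simple and undirected. $N[v]$ is the closed neighborhood of $v$. $\gamma(G)$ is the domination number; a minimum dominating set (mds) is a dominating set of size $\gamma(G)$. $\mathrm{core}(G)$ is the set of vertices in every mds, $\mathrm{corona}(G)$ the set of vertices in at least one mds. $G-v$ is $G$ with $v$ deleted; $V^0=\{v:\gamma(G-v)=\gamma(G)\}$, $V^-=\{v:\gamma(G-v)<\gamma(G)\}$. $G_v+u$ is the graph obtained from $G$ by adding a new vertex $u$ and the single edge $uv$. A vertex is isolated if it has no neighbors. *)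

(* Defs.v *)
(* A simple graph on a finite vertex type T is an edge relation
   e : rel T that is symmetric and irreflexive. Induced subgraphs are given by a
   vertex set A : {set T} together with (the restriction of) e. *)
From mathcomp Require Import all_boot.
Set Implicit Arguments. Unset Strict Implicit. Unset Printing Implicit Defensive.

Section Dom.
Variable T : finType.
Implicit Types (e : rel T) (A S : {set T}) (v : T).

Definition cnbhd e v : {set T} := [set w | (w == v) || e v w].

Definition dominating e A S : bool :=
  (S \subset A) && [forall x in A, [exists y in S, (y == x) || e x y]].

(* domination number of G[A] (A itself dominates, so the min is attained) *)
Definition gamma e A : nat :=
  \big[minn/#|A|]_(S : {set T} | dominating e A S) #|S|.

Definition is_mds e S : bool := dominating e setT S && (#|S| == gamma e setT).

Definition core e : {set T} := [set v | [forall S : {set T}, is_mds e S ==> (v \in S)]].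
Definition corona e : {set T} := [set v | [exists S : {set T}, is_mds e S && (v \in S)]].

(* G - v is G[V \ {v}] *)
Definition V0 e : {set T} := [set v | gamma e (setT :\ v) == gamma e setT].
Definition Vminus e : {set T} := [set v | gamma e (setT :\ v) < gamma e setT].

Definition isolated e v : bool := [forall w, ~~ e v w].

(* G_v + u : new vertex u = None, adjacent only to v *)
Definition add_leaf e v : rel (option T) :=
  fun a b => match a, b with
  | Some x, Some y => e x y
  | None, Some y => y == v
  | Some x, None => x == v
  | None, None => false
  end.
End Dom.

(* Main.v *)
Require Import Defs.
From mathcomp Require Import all_boot.
Set Implicit Arguments. Unset Strict Implicit.

Lemma bigmin_le_seq (I : eqType) (r : seq I) (P : pred I) (F : I -> nat) m j :
  j \in r -> P j -> \big[minn/m]_(i <- r | P i) F i <= F j.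
Proof.
elim: r => // i r IH; rewrite inE big_cons => /orP [/eqP <- Pj | jr Pj].
  by rewrite Pj geq_minl.
case: ifP => _; last exact: IH.
exact: leq_trans (geq_minr _ _) (IH jr Pj).
Qed.

Section G.
Variable T : finType.
Implicit Types (e : rel T) (A S : {set T}).

Lemma domP e A S : reflect (S \subset A /\ forall x, x \in A -> exists2 y, y \in S & (y == x) || e x y)
  (dominating e A S).
Proof.
apply: (iffP andP) => [[H1 /forall_inP H2]|[H1 H2]]; split => //.
  by move=> x /H2 /exists_inP.
by apply/forall_inP => x /H2 /exists_inP.
Qed.

Lemma gamma_le e A S : dominating e A S -> gamma e A <= #|S|.
Proof. by move=> H; apply: bigmin_le_seq => //; rewrite mem_index_enum. Qed.

Lemma gamma_ex e A : exists2 S, dominating e A S & #|S| = gamma e A.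
Proof.
rewrite /gamma; apply: (big_ind (fun m => exists2 S, dominating e A S & #|S| = m)).
- exists A => //; apply/domP; split => // x xA; exists x => //; by rewrite eqxx.
- move=> x y [S1 ? ?] [S2 ? ?]; rewrite /minn; case: ifP => _; [exists S1 | exists S2] => //.
- by move=> S HS; exists S.
Qed.

Lemma mds_of e D : dominating e setT D -> #|D| <= gamma e setT -> is_mds e D.
Proof. by move=> H H2; rewrite /is_mds H eqn_leq H2 gamma_le. Qed.

End G.
Section V.
Variable T : finType.
Variables (e : rel T) (v : T).

Lemma L_addv X : dominating e (setT :\ v) X -> dominating e setT (v |: X).
Proof.
case/domP => _ H; apply/domP; split; first by rewrite subsetT.
move=> x _; case: (x =P v) => [->|/eqP nxv].
  by exists v; rewrite ?setU11 ?eqxx.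
have: x \in setT :\ v by rewrite !inE nxv.
by case/H => y yX hy; exists y => //; rewrite in_setU1 yX orbT.
Qed.

Lemma L_rem D : dominating e setT D -> v \notin D -> dominating e (setT :\ v) D.
Proof.
case/domP => _ H vD; apply/domP; split; last by move=> x _; apply: H.
apply/subsetP => x xD; rewrite !inE andbT; apply/eqP => xv; subst.
by rewrite xD in vD.
Qed.

Lemma L_iso X : isolated e v -> dominating e setT X -> v \in X.
Proof.
move=> iso /domP [_ H]; case: (H v (in_setT v)) => y yX /orP[/eqP<-//|evy].
by have := forallP iso y; rewrite evy.
Qed.

Definition Yof (X : {set option T}) : {set T} := [set x | Some x \in X].

Lemma L_leaf1 X : dominating (add_leaf e v) setT X ->
  dominating e setT (v |: Yof X) /\ #|v |: Yof X| <= #|X|.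
Proof.
move/domP => [_ H]; split.
  apply/domP; split; first by rewrite subsetT.
  move=> x _; case: (H (Some x) (in_setT _)) => [[z|]] yX hy.
    by exists z; rewrite ?in_setU1 ?inE ?yX ?orbT.
  by move: hy => /= /eqP ->; exists v; rewrite ?setU11 ?eqxx.
have cY : #|Some @: Yof X| = #|Yof X| by apply: card_imset => a b [].
have sY : Some @: Yof X \subset X :\ None.
  by apply/subsetP => _ /imsetP [z zY ->]; rewrite !inE; rewrite inE in zY.
rewrite cardsU1; case NX: (None \in X).
  rewrite (cardsD1 None X) NX; apply: leq_add; first exact: leq_b1.
  by rewrite -cY; exact: subset_leq_card sY.
case: (H None (in_setT _)) => [[z|]] yX hy; last by rewrite yX in NX.
move: hy => /= /eqP zv; subst z.
have -> : v \in Yof X by rewrite inE.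
rewrite add0n -cY; apply: leq_trans (subset_leq_card sY) _.
by rewrite subset_leq_card // subD1set.
Qed.

Lemma L_leaf2 D : dominating e setT D -> v \in D ->
  dominating (add_leaf e v) setT (Some @: D).
Proof.
move=> /domP [_ H] vD; apply/domP; split; first by rewrite subsetT.
case=> [x|] _.
  case: (H x (in_setT _)) => y yD hy; exists (Some y); first exact: imset_f.
  by [].
by exists (Some v); [exact: imset_f | rewrite /= eqxx].
Qed.

Lemma gamma_leaf_ge : gamma e setT <= gamma (add_leaf e v) setT.
Proof.
have [X dX <-] := gamma_ex (add_leaf e v) setT.
case: (L_leaf1 dX) => d c; exact: leq_trans (gamma_le d) c.
Qed.
End V.

Theorem corollary1 (T : finType) (e : rel T)
  (e_sym : symmetric e) (e_irr : irreflexive e) (v : T) :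
  (v \in corona e :\: core e) <->
  ((v \in Vminus e) && ~~ isolated e v)
  \/ [/\ v \in V0 e,
         exists S : {set T},
           [/\ S \subset setT :\ v, #|S| = gamma e setT,
               dominating e (setT :\ v) S & S :&: cnbhd e v != set0]
       & gamma (add_leaf e v) setT = gamma e setT].
Proof.
split.
- rewrite !inE => /andP [ncore cor].
  case/forallPn: ncore => D'; rewrite negb_imply => /andP[/andP[dD' /eqP cD'] vD'].
  case/existsP: cor => D /andP[/andP[dD /eqP cD] vD].
  have leafeq : gamma (add_leaf e v) setT = gamma e setT.
    apply/eqP; rewrite eqn_leq gamma_leaf_ge andbT -cD.
    rewrite -(card_imset _ (fun a b (h : Some a = Some b) => let: erefl := h in erefl)).
    exact: gamma_le (L_leaf2 dD vD).
  case: (ltnP (gamma e (setT :\ v)) (gamma e setT)) => hlt.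
    left; rewrite /=; apply/negP => iso.
    by rewrite (L_iso iso dD') in vD'.
  have dR := L_rem dD' vD'.
  right; split => //.
    apply/eqP/anti_leq; rewrite hlt andbT -cD'; exact: gamma_le dR.
  exists D'; split => //; first by case/domP: dR.
  case/domP: dD' => _ /(_ v (in_setT v)) [y yD hy].
  by apply/set0Pn; exists y; rewrite !inE yD.
- case => [/andP [hV niso] | [hV0 [S [sub cS dS nS]] hleaf]].
  + move: hV; rewrite /Vminus inE => hV.
    have [X dX cX] := gamma_ex e (setT :\ v).
    have cXb : #|X|.+1 <= gamma e setT by rewrite cX.
    have XsV : X \subset setT :\ v by case/domP: dX.
    case/forallPn: niso => w; rewrite negbK => evw.
    have mD : is_mds e (v |: X).
      apply: mds_of; first exact: L_addv.
      by rewrite cardsU1; apply: leq_trans cXb; rewrite -add1n leq_add2r leq_b1.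
    have dD2 : dominating e setT (w |: X).
      case/domP: dX => _ H; apply/domP; split; first by rewrite subsetT.
      move=> x _; case: (x =P v) => [->|/eqP nxv].
        by exists w; rewrite ?setU11 ?evw ?orbT.
      have: x \in setT :\ v by rewrite !inE nxv.
      by case/H => y yX hy; exists y => //; rewrite in_setU1 yX orbT.
    have mD2 : is_mds e (w |: X).
      apply: mds_of => //.
      by rewrite cardsU1; apply: leq_trans cXb; rewrite -add1n leq_add2r leq_b1.
    have vD2 : v \notin w |: X.
      rewrite in_setU1 negb_or; apply/andP; split.
        by apply/eqP => vw; move: evw; rewrite vw e_irr.
      by apply/negP => /(subsetP XsV); rewrite !inE eqxx.
    rewrite !inE; apply/andP; split.
      by apply/forallPn; exists (w |: X); rewrite negb_imply mD2.
    by apply/existsP; exists (v |: X); rewrite mD setU11.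
  + have vS : v \notin S by apply/negP => /(subsetP sub); rewrite !inE eqxx.
    have mS : is_mds e S.
      apply: mds_of; last by rewrite cS.
      case/domP: dS => _ H; apply/domP; split; first by rewrite subsetT.
      move=> x _; case: (x =P v) => [->|/eqP nxv].
        case/set0Pn: nS => y; rewrite !inE => /andP[yS hy].
        by exists y.
      by apply: H; rewrite !inE nxv.
    have [X dX cX] := gamma_ex (add_leaf e v) setT.
    case: (L_leaf1 dX) => dZ cZ.
    have mZ : is_mds e (v |: Yof X) by apply: mds_of => //; rewrite -hleaf -cX.
    rewrite !inE; apply/andP; split.
      by apply/forallPn; exists S; rewrite negb_imply mS.
    by apply/existsP; exists (v |: Yof X); rewrite mZ setU11.
Qed.
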